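(* (a) If $p\ne0$ and $(p',u')=\Phi(p,u)$, then $p'u'+u'=pu+p$. (b) Consequently, for any trajectory $(p_j,u_j)=\Phi(p_{j-1},u_{j-1})$ one has $p_ju_j+u_j=p_{j-1}u_{j-1}+p_{j-1}$. (c) For the trajectory $T_n$ (with coordinates $(p_j,u_j)$, $0\le j\le n$) and $1\le\ell\le n$, $\sum_{j=1}^{\ell}(p_{j-1}-u_j)=p_\ell u_\ell$.
   Context: $\Phi$ is the partial map of $\mathbb{R}^2$ defined for $p\ne0$ by $\Phi(p,u)=\bigl(p^2(u+1)-1,\ 1/p\bigr)$. For $n\ge1$, the trajectory $T_n$ is the (existing and unique) finite sequence $(p_j,u_j)$, $j=0,\dots,n$, with $(p_j,u_j)=\Phi(p_{j-1},u_{j-1})$ for $1\le j\le n$, $u_0=0$, $p_n=0$, and $p_j>0$ for $0\le j\le n-1$. *)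

(* Defs.v *)
From Stdlib Require Import Reals.
Open Scope R_scope.

(* The partial map Phi(p,u) = (p^2 (u+1) - 1, 1/p); only meaningful for p <> 0
   (every use below carries the hypothesis p <> 0). *)
Definition Phi (p u : R) : R * R := (p ^ 2 * (u + 1) - 1, / p).

(* (p_j,u_j)_{0<=j<=n}, given as functions nat -> R (values beyond n irrelevant),
   is the trajectory T_n. *)
Definition IsTrajectory (n : nat) (p u : nat -> R) : Prop :=
  u 0%nat = 0 /\ p n = 0 /\
  (forall j : nat, (j < n)%nat -> 0 < p j) /\
  (forall j : nat, (1 <= j <= n)%nat ->
     p (j - 1)%nat <> 0 /\ (p j, u j) = Phi (p (j - 1)%nat) (u (j - 1)%nat)).

(* Main.v *)
Require Import Defs.
From Stdlib Require Import Reals Lra Lia.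
Open Scope R_scope.

Lemma partA : forall p u p' u' : R, p <> 0 -> (p', u') = Phi p u ->
     p' * u' + u' = p * u + p.
Proof.
  intros p u p' u' Hp H. unfold Phi in H. injection H as H1 H2. subst.
  field. exact Hp.
Qed.

Theorem lemma1 :
  (* (a) *)
  (forall p u p' u' : R, p <> 0 -> (p', u') = Phi p u ->
     p' * u' + u' = p * u + p) /\
  (* (b) *)
  (forall (p u : nat -> R) (j : nat), (1 <= j)%nat -> p (j - 1)%nat <> 0 ->
     (p j, u j) = Phi (p (j - 1)%nat) (u (j - 1)%nat) ->
     p j * u j + u j = p (j - 1)%nat * u (j - 1)%nat + p (j - 1)%nat) /\
  (* (c) sum_{j=1}^{l} (p_{j-1} - u_j), written as sum_{k=0}^{l-1} (p_k - u_{k+1}) *)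
  (forall (n : nat) (p u : nat -> R), (1 <= n)%nat -> IsTrajectory n p u ->
     forall l : nat, (1 <= l <= n)%nat ->
       sum_f_R0 (fun k => p k - u (S k)) (l - 1)%nat = p l * u l).
Proof.
  split; [exact partA|]. split.
  { intros p u j _ Hp H. exact (partA _ _ _ _ Hp H). }
  intros n p u _ [H0 [_ [_ Hs]]] l Hl.
  assert (key : forall m, (S m <= n)%nat ->
    sum_f_R0 (fun k => p k - u (S k)) m = p (S m) * u (S m)).
  { induction m as [|m IH]; intros Hm.
    - destruct (Hs 1%nat ltac:(lia)) as [Hp H]. simpl in *.
      pose proof (partA _ _ _ _ Hp H). rewrite H0 in *. lra.
    - simpl. rewrite IH by lia.
      destruct (Hs (S (S m)) ltac:(lia)) as [Hp H].
      replace (S (S m) - 1)%nat with (S m) in * by lia.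
      pose proof (partA _ _ _ _ Hp H). lra. }
  replace l with (S (l - 1)) at 2 3 by lia. apply key. lia.
Qed.
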